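(* Let $a,b>0$ with $a\ne b$, and $\nu\in(0,1)$ with $\nu\ne\frac12$. Let $r=\min\{\nu,1-\nu\}$, $R=\max\{\nu,1-\nu\}$ and $$E_\nu(a,b):=\frac{1}{\log b-\log a}\left(\frac{a^{1-\nu}b^\nu-a}{\nu}+\frac{b-a^{1-\nu}b^\nu}{1-\nu}-\frac{4\big(\sqrt{ab}-a^{1-\nu}b^\nu\big)}{1-2\nu}\right).$$ Then $$r\,E_\nu(a,b)\le L_\nu(a,b)-a^{1-\nu}b^\nu\le R\,E_\nu(a,b).$$
   Context: For $a,b>0$, $a\neq b$ and $\nu\in(0,1)$, the weighted logarithmic mean is $$L_\nu(a,b):=\frac{1}{\log a-\log b}\left\{\frac{1-\nu}{\nu}\big(a-a^{1-\nu}b^\nu\big)+\frac{\nu}{1-\nu}\big(a^{1-\nu}b^\nu-b\big)\right\}.$$ *)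

(* Defs.v *)
From Stdlib Require Import Reals.
Open Scope R_scope.

Definition wgm (nu a b : R) : R := Rpower a (1 - nu) * Rpower b nu.

Definition L_nu (nu a b : R) : R :=
  / (ln a - ln b) *
  ((1 - nu) / nu * (a - wgm nu a b) + nu / (1 - nu) * (wgm nu a b - b)).

Definition E_nu (nu a b : R) : R :=
  / (ln b - ln a) *
  ((wgm nu a b - a) / nu + (b - wgm nu a b) / (1 - nu)
   - 4 * (sqrt (a * b) - wgm nu a b) / (1 - 2 * nu)).

(* Main.v *)
Require Import Defs.
From Stdlib Require Import Reals Lra Psatz.
From Coquelicot Require Import Coquelicot.
Open Scope R_scope.
Lemma sgn_lemma (f f' : R -> R) :
  f 0 = 0 -> (forall x, is_derive f x (f' x)) -> (forall x, 0 <= f' x) ->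
  forall s, 0 <= s * f s.
Proof.
  intros H0 Hd Hp s.
  assert (pr : derivable f).
  { intro x. exists (f' x). apply is_derive_Reals. apply Hd. }
  assert (Hinc : increasing f).
  { apply (nonneg_derivative_1 f pr). intro x.
    replace (derive_pt f x (pr x)) with (f' x). apply Hp.
    symmetry. apply derive_pt_eq_0. apply is_derive_Reals. apply Hd. }
  destruct (Rle_dec 0 s).
  - assert (0 <= f s) by (rewrite <- H0; apply Hinc; lra). nra.
  - assert (f s <= 0) by (rewrite <- H0; apply Hinc; lra). nra.
Qed.

Lemma jensen (l x y : R) : 0 <= l <= 1 ->
  exp (l * x + (1 - l) * y) <= l * exp x + (1 - l) * exp y.
Proof.
  intros Hl. set (m := l * x + (1 - l) * y).
  assert (Ex : exp x = exp m * exp (x - m)) by (rewrite <- exp_plus; f_equal; ring).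
  assert (Ey : exp y = exp m * exp (y - m)) by (rewrite <- exp_plus; f_equal; ring).
  pose proof (exp_ineq1_le (x - m)). pose proof (exp_ineq1_le (y - m)).
  pose proof (exp_pos m).
  rewrite Ex, Ey.
  assert (l * (exp m * (1 + (x - m))) + (1 - l) * (exp m * (1 + (y - m))) = exp m)
    by (unfold m; ring).
  assert (A1 : exp m * (1 + (x - m)) <= exp m * exp (x - m)) by (apply Rmult_le_compat_l; lra).
  assert (A2 : exp m * (1 + (y - m)) <= exp m * exp (y - m)) by (apply Rmult_le_compat_l; lra).
  assert (l * (exp m * (1 + (x - m))) <= l * (exp m * exp (x - m))) by (apply Rmult_le_compat_l; lra).
  assert ((1 - l) * (exp m * (1 + (y - m))) <= (1 - l) * (exp m * exp (y - m))) by (apply Rmult_le_compat_l; lra).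
  lra.
Qed.

Lemma sinh_lemma (u : R) : 0 <= u * (exp u - exp (- u) - 2 * u).
Proof.
  refine (sgn_lemma (fun u => exp u - exp (- u) - 2 * u)
                   (fun u => exp u + exp (- u) - 2) _ _ _ u).
  - rewrite Ropp_0, exp_0. ring.
  - intro x. auto_derive; auto. ring.
  - intro x. rewrite exp_Ropp. pose proof (exp_pos x).
    assert (exp x + / exp x - 2 = (exp x - 1)^2 / exp x) by (field; lra).
    rewrite H0. apply Rmult_le_pos. apply pow2_ge_0. left; apply Rinv_0_lt_compat; lra.
Qed.

(* Hermite-Hadamard for exp *)
Lemma HH (s x y : R) : x < y -> s <> 0 ->
  (y - x) * exp (s * (x + y) / 2) <= (exp (y * s) - exp (x * s)) / s.
Proof.
  intros Hxy Hs.
  set (m := s * (x + y) / 2). set (u := s * (y - x) / 2).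
  assert (E1 : exp (y * s) = exp m * exp u) by (rewrite <- exp_plus; f_equal; unfold m, u; field).
  assert (E2 : exp (x * s) = exp m * exp (- u)) by (rewrite <- exp_plus; f_equal; unfold m, u; field).
  rewrite E1, E2. pose proof (sinh_lemma u). pose proof (exp_pos m).
  assert (K : 0 <= (exp u - exp (- u) - 2 * u) / s).
  { set (D := exp u - exp (- u) - 2 * u) in *.
    destruct (Rlt_dec 0 s).
    - assert (0 < u) by (unfold u; nra).
      assert (0 <= D).
      { destruct (Rle_dec 0 D); auto. assert (u * D < 0) by (apply Rmult_pos_neg; lra). lra. }
      apply Rmult_le_pos. lra. left; apply Rinv_0_lt_compat; lra.
    - assert (s < 0) by lra. assert (u < 0) by (unfold u; nra).
      assert (D <= 0).
      { destruct (Rle_dec D 0); auto. assert (0 < D) by lra. assert (u * D < 0) by (rewrite Rmult_comm; apply Rmult_pos_neg; lra). lra. }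
      replace (D / s) with ((- D) / (- s)) by (field; lra).
      apply Rmult_le_pos. lra. left; apply Rinv_0_lt_compat; lra. }
  assert ((exp m * exp u - exp m * exp (- u)) / s - (y - x) * exp m
          = exp m * ((exp u - exp (- u) - 2 * u) / s)) by (unfold u; field; auto).
  nra.
Qed.

Lemma C_lemma (c : R) : 0 < c < 1 -> forall sg,
  0 <= sg * ((1 - c) * sg + c * (exp sg - 1) - (exp (c * sg) - 1) / c).
Proof.
  intros Hc sg. refine (sgn_lemma (fun sg => (1 - c) * sg + c * (exp sg - 1) - (exp (c * sg) - 1) / c) (fun x => (1 - c) + c * exp x - exp (c * x)) _ _ _ sg).
  - cbv beta. rewrite !Rmult_0_r, exp_0. field; lra.
  - intro x. auto_derive; auto. field; lra.
  - intro x. pose proof (jensen c x 0 ltac:(lra)). rewrite exp_0 in H.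
    replace (c * x + (1 - c) * 0) with (c * x) in H by ring. lra.
Qed.

Lemma nonneg_div (x y : R) : 0 <= x -> 0 < y -> 0 <= x / y.
Proof. intros; apply Rmult_le_pos; [lra | left; apply Rinv_0_lt_compat; lra]. Qed.

Lemma core (s nu e0 e1 eh : R) : s <> 0 -> 0 < nu < 1 -> nu <> 1/2 ->
  e0 = exp (nu * s) -> e1 = exp s -> eh = exp (s / 2) ->
  let P := (e0 - 1) / s in let Q := (e1 - e0) / s in let H := (eh - e0) / s in
  let Lm := (1 - nu) / nu * P + nu / (1 - nu) * Q - e0 in
  let Em := P / nu + Q / (1 - nu) - 4 * H / (1 - 2 * nu) in
  Rmin nu (1 - nu) * Em <= Lm /\ Lm <= Rmax nu (1 - nu) * Em.
Proof.
  intros Hs Hnu Hh He0 He1 Heh P Q H Lm Em.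
  assert (He0p : 0 < e0) by (rewrite He0; apply exp_pos).
  destruct (Rlt_dec nu (1/2)) as [Hlt | Hge].
  - rewrite Rmin_left by lra. rewrite Rmax_right by lra. split.
    +
      pose proof (HH s 0 nu ltac:(lra) Hs) as A.
      pose proof (HH s nu (1/2) ltac:(lra) Hs) as B.
      pose proof (jensen (1 - 2 * nu) (s * (0 + nu) / 2) (s * (nu + 1/2) / 2) ltac:(lra)) as J.
      replace ((1 - 2 * nu) * (s * (0 + nu) / 2) + (1 - (1 - 2 * nu)) * (s * (nu + 1/2) / 2))
        with (nu * s) in J by field.
      rewrite Rmult_0_l, exp_0, <- He0 in A.
      replace (1/2 * s) with (s/2) in B by field. rewrite <- He0, <- Heh in B.
      fold P in A. fold H in B.
      set (ex := exp (s * (0 + nu) / 2)) in *. set (ey := exp (s * (nu + 1/2) / 2)) in *.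
      assert (A' : (1 - 2 * nu) * ex <= (1 - 2 * nu) / nu * P).
      { replace ((1 - 2 * nu) * ex) with ((1 - 2 * nu) / nu * ((nu - 0) * ex)) by (field; lra).
        apply Rmult_le_compat_l; auto. apply nonneg_div; lra. }
      assert (B' : 2 * nu * ey <= 4 * nu / (1 - 2 * nu) * H).
      { replace (2 * nu * ey) with (4 * nu / (1 - 2 * nu) * ((1/2 - nu) * ey)) by (field; lra).
        apply Rmult_le_compat_l; auto. apply nonneg_div; lra. }
      assert (Lm - nu * Em = (1 - 2 * nu) / nu * P + 4 * nu / (1 - 2 * nu) * H - e0)
        by (unfold Lm, Em; field; lra).
      rewrite <- He0 in J. lra.
    +
      set (c := (1 - 2 * nu) / (2 * (1 - nu))).
      assert (Hc : 0 < c < 1) by (unfold c; split; [apply Rdiv_lt_0_compat; lra | apply Rmult_lt_reg_r with (2 * (1 - nu)); [lra|]; field_simplify; lra]).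
      set (sg := s * (1 - nu)).
      pose proof (C_lemma c Hc sg) as Z.
      assert (E1 : e1 = e0 * exp sg) by (rewrite He0, He1, <- exp_plus; f_equal; unfold sg; ring).
      assert (E2 : eh = e0 * exp (c * sg)) by (rewrite He0, Heh, <- exp_plus; f_equal; unfold sg, c; field; lra).
      assert (Eq : (1 - nu) * Em - Lm = e0 * 2 * (sg * ((1 - c) * sg + c * (exp sg - 1) - (exp (c * sg) - 1) / c)) / (s * s * (1 - nu))).
      { unfold Lm, Em, P, Q, H. rewrite E1, E2. unfold c, sg. field. repeat split; lra. }
      assert (0 <= e0 * 2 * (sg * ((1 - c) * sg + c * (exp sg - 1) - (exp (c * sg) - 1) / c)) / (s * s * (1 - nu))).
      { apply nonneg_div. apply Rmult_le_pos; lra. assert (0 < s * s) by nra. nra. }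
      lra.
  - assert (Hgt : 1/2 < nu) by lra.
    rewrite Rmin_right by lra. rewrite Rmax_left by lra. split.
    +
      pose proof (HH s nu 1 ltac:(lra) Hs) as A.
      pose proof (HH s (1/2) nu ltac:(lra) Hs) as B.
      pose proof (jensen (2 * nu - 1) (s * (nu + 1) / 2) (s * (1/2 + nu) / 2) ltac:(lra)) as J.
      replace ((2 * nu - 1) * (s * (nu + 1) / 2) + (1 - (2 * nu - 1)) * (s * (1/2 + nu) / 2))
        with (nu * s) in J by field.
      rewrite Rmult_1_l, <- He0, <- He1 in A.
      replace (1/2 * s) with (s/2) in B by field. rewrite <- He0, <- Heh in B.
      fold Q in A.
      assert (B0 : (e0 - eh) / s = - H) by (unfold H; field; auto). rewrite B0 in B.
      set (ex := exp (s * (nu + 1) / 2)) in *. set (ey := exp (s * (1/2 + nu) / 2)) in *.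
      assert (A' : (2 * nu - 1) * ex <= (2 * nu - 1) / (1 - nu) * Q).
      { replace ((2 * nu - 1) * ex) with ((2 * nu - 1) / (1 - nu) * ((1 - nu) * ex)) by (field; lra).
        apply Rmult_le_compat_l; auto. apply nonneg_div; lra. }
      assert (B' : 2 * (1 - nu) * ey <= 4 * (1 - nu) / (2 * nu - 1) * (- H)).
      { replace (2 * (1 - nu) * ey) with (4 * (1 - nu) / (2 * nu - 1) * ((nu - 1/2) * ey)) by (field; lra).
        apply Rmult_le_compat_l; auto. apply nonneg_div; lra. }
      assert (Lm - (1 - nu) * Em = (2 * nu - 1) / (1 - nu) * Q + 4 * (1 - nu) / (2 * nu - 1) * (- H) - e0)
        by (unfold Lm, Em; field; lra).
      rewrite <- He0 in J. lra.
    +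
      set (c := (2 * nu - 1) / (2 * nu)).
      assert (Hc : 0 < c < 1) by (unfold c; split; [apply Rdiv_lt_0_compat; lra | apply Rmult_lt_reg_r with (2 * nu); [lra|]; field_simplify; lra]).
      set (sg := - s * nu).
      assert (Hsg : sg <> 0) by (unfold sg; intro; apply Hs; nra).
      pose proof (C_lemma c Hc sg) as Z.
      assert (E1 : 1 = e0 * exp sg) by (rewrite He0, <- exp_plus; replace (nu * s + sg) with 0 by (unfold sg; ring); symmetry; apply exp_0).
      assert (E2 : eh = e0 * exp (c * sg)) by (rewrite He0, Heh, <- exp_plus; f_equal; unfold sg, c; field; lra).
      assert (Eq : nu * Em - Lm = e0 * 2 * nu * (sg * ((1 - c) * sg + c * (exp sg - 1) - (exp (c * sg) - 1) / c)) / (sg * sg)).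
      { unfold Lm, Em, P, Q, H. rewrite E2. replace (e0 - 1) with (e0 - e0 * exp sg) by (rewrite <- E1; reflexivity). unfold c, sg. field. repeat split; try lra. }
      assert (0 <= e0 * 2 * nu * (sg * ((1 - c) * sg + c * (exp sg - 1) - (exp (c * sg) - 1) / c)) / (sg * sg)).
      { apply nonneg_div. apply Rmult_le_pos; [|lra]. apply Rmult_le_pos; lra. assert (0 < sg * sg) by nra. nra. }
      lra.
Qed.

Theorem corollary2p13 (a b nu : R) :
  0 < a -> 0 < b -> a <> b -> 0 < nu < 1 -> nu <> 1 / 2 ->
  Rmin nu (1 - nu) * E_nu nu a b <= L_nu nu a b - wgm nu a b /\
  L_nu nu a b - wgm nu a b <= Rmax nu (1 - nu) * E_nu nu a b.
Proof.
  intros Ha Hb Hab Hnu Hh.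
  remember (ln b - ln a) as s eqn:Hs.
  assert (Hs0 : s <> 0).
  { intro E. apply Hab. apply ln_inv; auto. lra. }
  assert (Hw : wgm nu a b = a * exp (nu * s)).
  { unfold wgm, Rpower. rewrite <- exp_plus. rewrite <- (exp_ln a) at 2 by auto.
    rewrite <- exp_plus. f_equal. rewrite Hs. ring. }
  assert (Hbb : b = a * exp s).
  { rewrite <- (exp_ln a) at 1 by auto. rewrite <- exp_plus, Hs.
    replace (ln a + (ln b - ln a)) with (ln b) by ring. symmetry; apply exp_ln; auto. }
  assert (Hsq : sqrt (a * b) = a * exp (s / 2)).
  { replace (a * b) with ((a * exp (s / 2)) * (a * exp (s / 2))).
    apply sqrt_square. pose proof (exp_pos (s/2)). nra.
    rewrite Hbb. replace (exp s) with (exp (s/2) * exp (s/2)). ring.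
    rewrite <- exp_plus. f_equal. field. }
  unfold L_nu, E_nu. rewrite Hw, Hsq.
  replace (ln a - ln b) with (- s) by (rewrite Hs; ring).
  rewrite <- Hs. rewrite Hbb.
  pose proof (core s nu (exp (nu * s)) (exp s) (exp (s / 2)) Hs0 Hnu Hh eq_refl eq_refl eq_refl) as C.
  cbv zeta in C.
  set (e0 := exp (nu * s)) in *. set (e1 := exp s) in *. set (eh := exp (s / 2)) in *.
  assert (Hnu0 : nu <> 0) by lra. assert (Hnu1 : 1 - nu <> 0) by lra.
  assert (Hnu2 : 1 - 2 * nu <> 0) by lra.
  set (Lm := (1 - nu) / nu * ((e0 - 1) / s) + nu / (1 - nu) * ((e1 - e0) / s) - e0) in *.
  set (Em := (e0 - 1) / s / nu + (e1 - e0) / s / (1 - nu) - 4 * ((eh - e0) / s) / (1 - 2 * nu)) in *.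
  assert (EL : / - s * ((1 - nu) / nu * (a - a * e0) + nu / (1 - nu) * (a * e0 - a * e1)) - a * e0 = a * Lm)
    by (unfold Lm; field; auto).
  assert (EE : / s * ((a * e0 - a) / nu + (a * e1 - a * e0) / (1 - nu) - 4 * (a * eh - a * e0) / (1 - 2 * nu)) = a * Em)
    by (unfold Em; field; auto).
  rewrite EL, EE. destruct C as [C1 C2]. split.
  - replace (Rmin nu (1 - nu) * (a * Em)) with (a * (Rmin nu (1 - nu) * Em)) by ring.
    apply Rmult_le_compat_l; lra.
  - replace (Rmax nu (1 - nu) * (a * Em)) with (a * (Rmax nu (1 - nu) * Em)) by ring.
    apply Rmult_le_compat_l; lra.
Qed.
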